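(* There is an absolute constant $C>0$ such that the following holds. Let $G=(V,E)$ be an $(n,d,\lambda)$-expander. Then for every rule $\mathcal{R}$ and every starting vertex, the greedy random walk on $G$ satisfies \[ \mathbb{E}[C_E(G)] \le |E| + C\,\frac{n\log n}{1-\lambda}. \] In particular, for a family of such expanders with $\lambda$ bounded away from $1$ and $d=\Omega(\log n)$, the expected edge cover time is $O(|E|)$.
   Context: A greedy random walk (GRW) on a connected locally finite graph $G=(V,E)$ with rule $\mathcal{R}$ started at $v_0$: $X_0=v_0$; with $H_t=\{\{X_{s-1},X_s\}:0<s\le t\}$ and $J_t(v)=\{e\in E: v\in e, e\notin H_t\}$, if $J_t(X_t)\ne\emptyset$ then $X_{t+1}=w$ for some $w$ with $\{X_t,w\}\in J_t(X_t)$, chosen according to an arbitrary (possibly randomized, history-dependent) rule $\mathcal{R}$; if $J_t(X_t)=\emptyset$ then $X_{t+1}$ is a uniformly random neighbor of $X_t$. $C_E(G)=\min\{t:H_t=E\}$ is the edge cover time. For a $d$-regular graph $G$ on $n$ vertices let $A$ be its normalized adjacency matrix ($A(u,v)=1/d$ if $\{u,v\}\in E$, $0$ otherwise), with eigenvalues $1=\lambda_1\ge\lambda_2\ge\dots\ge\lambda_n\ge-1$, and $\lambda(G)=\max_{2\le i\le n}|\lambda_i|$. $G$ is an $(n,d,\lambda)$-expander if it is $d$-regular on $n$ vertices and $\lambda(G)<\lambda<1$. *)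

(* Defs.v *)
From Stdlib Require Import Reals List Bool Arith Relations.
Import ListNotations.
Open Scope R_scope.

(* Vertices of a graph on n vertices are the naturals 0..n-1;
   the graph is given by a boolean adjacency relation adj. *)

Fixpoint rsum (k : nat) (f : nat -> R) : R :=
  match k with O => 0 | S k' => rsum k' f + f k' end.

Definition lsum (l : list R) : R := fold_right Rplus 0 l.

Definition isE (n : nat) (adj : nat -> nat -> bool) (u v : nat) : bool :=
  Nat.ltb u n && Nat.ltb v n && adj u v.

Definition simple_graph (n : nat) (adj : nat -> nat -> bool) : Prop :=
  (forall u v, adj u v = adj v u) /\ (forall u, adj u u = false).

Definition connected (n : nat) (adj : nat -> nat -> bool) : Prop :=
  forall u v, (u < n)%nat -> (v < n)%nat ->
    clos_refl_trans nat (fun a b => isE n adj a b = true) u v.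

Definition regular (n d : nat) (adj : nat -> nat -> bool) : Prop :=
  forall u, (u < n)%nat -> length (filter (isE n adj u) (seq 0 n)) = d.

Definition edge_count (n : nat) (adj : nat -> nat -> bool) : nat :=
  list_sum (map (fun u => length (filter (fun v => Nat.ltb u v && isE n adj u v)
                                         (seq 0 n))) (seq 0 n)).

Definition Aop (n d : nat) (adj : nat -> nat -> bool) (x : nat -> R) (u : nat) : R :=
  rsum n (fun w => (if isE n adj u w then / INR d else 0) * x w).

Definition inner (n : nat) (x y : nat -> R) : R := rsum n (fun u => x u * y u).

(* Spectrum of the (symmetric) matrix A listed with multiplicity as
   mu 0 >= mu 1 >= ... >= mu (n-1) (i.e. lambda_1 >= ... >= lambda_n),
   witnessed by an orthonormal eigenbasis vec 0, ..., vec (n-1);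
   lambda(G) < lam  means  |lambda_i| < lam for 2 <= i <= n. *)
Definition lambdaG_lt (n d : nat) (adj : nat -> nat -> bool) (lam : R) : Prop :=
  exists (mu : nat -> R) (vec : nat -> nat -> R),
    (forall i j, (i < n)%nat -> (j < n)%nat ->
        inner n (vec i) (vec j) = if Nat.eqb i j then 1 else 0) /\
    (forall i u, (i < n)%nat -> (u < n)%nat ->
        Aop n d adj (vec i) u = mu i * vec i u) /\
    (forall i j, (i <= j)%nat -> (j < n)%nat -> mu j <= mu i) /\
    (forall i, (1 <= i)%nat -> (i < n)%nat -> Rabs (mu i) < lam).

Definition expander (n d : nat) (adj : nat -> nat -> bool) (lam : R) : Prop :=
  simple_graph n adj /\ regular n d adj /\ lambdaG_lt n d adj lam /\ lam < 1.

Fixpoint steps (p : list nat) : list (nat * nat) :=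
  match p with
  | a :: ((b :: _) as q) => (a, b) :: steps q
  | _ => []
  end.

Definition same_edge (e : nat * nat) (u v : nat) : bool :=
  (Nat.eqb (fst e) u && Nat.eqb (snd e) v) || (Nat.eqb (fst e) v && Nat.eqb (snd e) u).

Definition traversed (p : list nat) (u v : nat) : bool :=
  existsb (fun e => same_edge e u v) (steps p).

(* history hist = [X_0; ...; X_t]; current vertex X_t *)
Definition cur (hist : list nat) : nat := last hist 0%nat.

Definition unused_at (n : nat) (adj : nat -> nat -> bool) (hist : list nat) (w : nat) : bool :=
  isE n adj (cur hist) w && negb (traversed hist (cur hist) w).

Definition has_unused (n : nat) (adj : nat -> nat -> bool) (hist : list nat) : bool :=
  existsb (unused_at n adj hist) (seq 0 n).

(* A rule: given the history [X_0;...;X_t], a probability distribution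
   (weights) on the next vertex.  It is only used when J_t(X_t) is nonempty,
   and must then be supported on the unused incident edges. *)
Definition rule := list nat -> nat -> R.

Definition valid_rule (n : nat) (adj : nat -> nat -> bool) (Rl : rule) : Prop :=
  forall hist, has_unused n adj hist = true ->
    (forall w, 0 <= Rl hist w) /\
    (forall w, Rl hist w <> 0 -> unused_at n adj hist w = true) /\
    rsum n (Rl hist) = 1.

Definition trans (n d : nat) (adj : nat -> nat -> bool) (Rl : rule)
    (hist : list nat) (w : nat) : R :=
  if has_unused n adj hist then Rl hist w
  else if isE n adj (cur hist) w then / INR d else 0.

Fixpoint pprob (n d : nat) (adj : nat -> nat -> bool) (Rl : rule)
    (hist ws : list nat) : R :=
  match ws with
  | [] => 1
  | w :: ws' => trans n d adj Rl hist w * pprob n d adj Rl (hist ++ [w]) ws'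
  end.

Fixpoint all_seqs (n t : nat) : list (list nat) :=
  match t with
  | O => [[]]
  | S t' => flat_map (fun w => map (cons w) (all_seqs n t')) (seq 0 n)
  end.

Definition covered (n : nat) (adj : nat -> nat -> bool) (p : list nat) : bool :=
  forallb (fun u => forallb (fun v => implb (isE n adj u v) (traversed p u v))
                            (seq 0 n)) (seq 0 n).

(* C_E = t  for the path X_0..X_t = v0 :: ws  (t = length ws) *)
Definition cover_exactly (n : nat) (adj : nat -> nat -> bool) (v0 : nat) (ws : list nat) : bool :=
  match ws with
  | [] => covered n adj [v0]
  | _ => covered n adj (v0 :: ws) && negb (covered n adj (removelast (v0 :: ws)))
  end.

Definition prob_cover_le (n d : nat) (adj : nat -> nat -> bool) (Rl : rule) (v0 T : nat) : R :=
  lsum (map (fun ws => pprob n d adj Rl [v0] ws * (if covered n adj (v0 :: ws) then 1 else 0))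
            (all_seqs n T)).

Definition prob_cover_eq (n d : nat) (adj : nat -> nat -> bool) (Rl : rule) (v0 t : nat) : R :=
  lsum (map (fun ws => pprob n d adj Rl [v0] ws * (if cover_exactly n adj v0 ws then 1 else 0))
            (all_seqs n t)).

(* E[C_E] <= B : C_E is a.s. finite (otherwise E[C_E] = +infinity) and
   sum_t t * P(C_E = t) <= B. *)
Definition expected_cover_le (n d : nat) (adj : nat -> nat -> bool) (Rl : rule)
    (v0 : nat) (B : R) : Prop :=
  (forall eps, 0 < eps -> exists T, 1 - eps <= prob_cover_le n d adj Rl v0 T) /\
  (forall T, rsum (S T) (fun t => INR t * prob_cover_eq n d adj Rl v0 t) <= B).

(* Main.v *)
Require Import Defs.
From Stdlib Require Import Reals Lia Lra Psatz List Bool Arith ZArith FunctionalExtensionality Classical.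
From mathcomp Require ssreflect ssrbool ssrfun eqtype ssrnat seq fintype bigop ssralg matrix Rstruct.
Import ListNotations.
Open Scope R_scope.
Set Bullet Behavior "Strict Subproofs".

Section Bridge.
Import ssreflect ssrbool ssrfun eqtype ssrnat seq fintype bigop ssralg matrix Rstruct.
Import GRing.Theory.
Local Open Scope ring_scope.

Lemma rsum_big (k : nat) (F : nat -> R) :
  rsum k F = (\sum_(i < k) F (nat_of_ord i))%R.
Proof.
elim: k => [|k IH]; first by rewrite big_ord0.
by rewrite big_ord_recr /= IH.
Qed.

Lemma completeness_mc (n : nat) (vec : nat -> nat -> R) :
  (forall i j, (i < n)%coq_nat -> (j < n)%coq_nat ->
     rsum n (fun u => vec i u * vec j u) = if Nat.eqb i j then 1 else 0) ->
  forall u w, (u < n)%coq_nat -> (w < n)%coq_nat ->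
     rsum n (fun i => vec i u * vec i w) = if Nat.eqb u w then 1 else 0.
Proof.
move=> Horth u w Hu Hw.
pose V : 'M[R]_n := \matrix_(i < n, j < n) vec i j.
have H1 : (V *m V^T = 1%:M)%R.
  apply/matrixP => i j.
  rewrite !mxE.
  under eq_bigr do rewrite !mxE.
  rewrite -(rsum_big n (fun k => vec i k * vec j k)) Horth; try exact/ltP.
  case: (Nat.eqb_spec i j) => [/val_inj -> | Hne]; first by rewrite eqxx.
  case: eqP => // E; by case: Hne; rewrite E.
have H2 := mulmx1C H1.
have := congr1 (fun M : 'M[R]_n => M (Ordinal (introT ltP Hu)) (Ordinal (introT ltP Hw))) H2.
rewrite /= !mxE.
under eq_bigr do rewrite !mxE.
rewrite -(rsum_big n (fun i => vec i u * vec i w)) => ->.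
case: (Nat.eqb_spec u w) => [E|Hne].
  subst. by rewrite (_ : (_ == _) = true) //; apply/eqP; exact: val_inj.
case: eqP => // E; case: Hne; exact: (congr1 val E).
Qed.
End Bridge.

Lemma completeness (n : nat) (vec : nat -> nat -> R) :
  (forall i j, (i < n)%nat -> (j < n)%nat ->
     rsum n (fun u => vec i u * vec j u) = if Nat.eqb i j then 1 else 0) ->
  forall u w, (u < n)%nat -> (w < n)%nat ->
     rsum n (fun i => vec i u * vec i w) = if Nat.eqb u w then 1 else 0.
Proof. exact (completeness_mc n vec). Qed.

Set Bullet Behavior "Strict Subproofs".

Lemma rsum_ext k f g : (forall i, (i < k)%nat -> f i = g i) -> rsum k f = rsum k g.
Proof.
  induction k; intros H; simpl; auto.
  rewrite IHk by (intros; apply H; lia). rewrite H by lia. reflexivity.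
Qed.

Lemma rsum_plus k f g : rsum k (fun i => f i + g i) = rsum k f + rsum k g.
Proof. induction k; simpl; [lra| rewrite IHk; lra]. Qed.

Lemma rsum_minus k f g : rsum k (fun i => f i - g i) = rsum k f - rsum k g.
Proof. induction k; simpl; [lra| rewrite IHk; lra]. Qed.

Lemma rsum_scal k c f : rsum k (fun i => c * f i) = c * rsum k f.
Proof. induction k; simpl; [lra| rewrite IHk; lra]. Qed.

Lemma rsum_scal_r k c f : rsum k (fun i => f i * c) = rsum k f * c.
Proof. induction k; simpl; [lra| rewrite IHk; lra]. Qed.

Lemma rsum_le k f g : (forall i, (i < k)%nat -> f i <= g i) -> rsum k f <= rsum k g.
Proof.
  induction k; intros H; simpl; [lra|].
  assert (rsum k f <= rsum k g) by (apply IHk; intros; apply H; lia).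
  assert (f k <= g k) by (apply H; lia). lra.
Qed.

Lemma rsum_nonneg k f : (forall i, (i < k)%nat -> 0 <= f i) -> 0 <= rsum k f.
Proof.
  intros H. replace 0 with (rsum k (fun _ => 0)).
  - apply rsum_le; auto.
  - induction k; simpl; auto. rewrite IHk; [lra|]. intros; apply H; lia.
Qed.

Lemma rsum_zero k : rsum k (fun _ => 0) = 0.
Proof. induction k; simpl; auto. rewrite IHk; lra. Qed.

Lemma rsum_const k c : rsum k (fun _ => c) = INR k * c.
Proof. induction k; simpl rsum; [simpl; lra|]. rewrite IHk, S_INR; lra. Qed.

Lemma rsum_swap k m f :
  rsum k (fun i => rsum m (fun j => f i j)) = rsum m (fun j => rsum k (fun i => f i j)).
Proof.
  induction k; simpl.
  - rewrite rsum_zero; auto.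
  - rewrite IHk. rewrite <- rsum_plus. reflexivity.
Qed.

Lemma rsum_first k f : rsum (S k) f = f 0%nat + rsum k (fun i => f (S i)).
Proof.
  induction k; simpl; [lra|]. simpl in IHk. rewrite IHk. lra.
Qed.

Lemma rsum_delta k i a : (i < k)%nat ->
  rsum k (fun j => if Nat.eqb i j then a j else 0) = a i.
Proof.
  induction k; intros H; [lia|]. simpl.
  destruct (Nat.eqb_spec i k).
  - subst. rewrite (rsum_ext _ _ (fun _ => 0)).
    + rewrite rsum_zero; lra.
    + intros j Hj. destruct (Nat.eqb_spec k j); [lia|auto].
  - rewrite IHk by lia. lra.
Qed.

Lemma rsum_delta' k i a : (i < k)%nat ->
  rsum k (fun j => if Nat.eqb j i then a j else 0) = a i.
Proof.
  intros H. rewrite <- (rsum_delta k i a H). apply rsum_ext.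
  intros j _. rewrite Nat.eqb_sym. auto.
Qed.

Lemma rsum_single_le k f i : (forall j, (j < k)%nat -> 0 <= f j) -> (i < k)%nat ->
  f i <= rsum k f.
Proof.
  induction k; intros H Hi; [lia|]. simpl.
  assert (0 <= rsum k f) by (apply rsum_nonneg; intros; apply H; lia).
  assert (0 <= f k) by (apply H; lia).
  destruct (Nat.eq_dec i k).
  - subst; lra.
  - assert (f i <= rsum k f) by (apply IHk; [intros; apply H; lia| lia]). lra.
Qed.

Lemma rsum_strict k f g a c : (forall i, (i < k)%nat -> f i <= g i) -> (a < k)%nat ->
  f a + c <= g a -> rsum k f + c <= rsum k g.
Proof.
  induction k; intros H Ha Hc; [lia|]. simpl.
  destruct (Nat.eq_dec a k).
  - subst. assert (rsum k f <= rsum k g) by (apply rsum_le; intros; apply H; lia). lra.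
  - assert (rsum k f + c <= rsum k g) by (apply IHk; [intros; apply H; lia | lia | auto]).
    assert (f k <= g k) by (apply H; lia). lra.
Qed.

Lemma rsum_mult k m f g :
  rsum k f * rsum m g = rsum k (fun i => rsum m (fun j => f i * g j)).
Proof.
  rewrite <- rsum_scal_r. apply rsum_ext. intros i _. rewrite rsum_scal. reflexivity.
Qed.

Lemma cauchy_schwarz k a b :
  (rsum k (fun i => a i * b i))^2 <= rsum k (fun i => a i ^ 2) * rsum k (fun i => b i ^ 2).
Proof.
  assert (E1 : (rsum k (fun i => a i * b i))^2 =
     rsum k (fun i => rsum k (fun j => (a i * b i) * (a j * b j)))).
  { rewrite <- rsum_mult. simpl. lra. }
  assert (E2 : rsum k (fun i => a i ^ 2) * rsum k (fun i => b i ^ 2) =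
     rsum k (fun i => rsum k (fun j => a i ^ 2 * b j ^ 2))).
  { rewrite <- rsum_mult. reflexivity. }
  rewrite E1, E2.
  set (D := fun i j => a i ^ 2 * b j ^ 2 - (a i * b i) * (a j * b j)).
  assert (HD : 0 <= rsum k (fun i => rsum k (fun j => D i j))).
  { assert (2 * rsum k (fun i => rsum k (fun j => D i j)) =
            rsum k (fun i => rsum k (fun j => (a i * b j - a j * b i)^2))).
    { replace (2 * rsum k (fun i => rsum k (fun j => D i j))) with
        (rsum k (fun i => rsum k (fun j => D i j)) + rsum k (fun i => rsum k (fun j => D j i))) by
        (rewrite (rsum_swap k k (fun i j => D j i)); lra).
      rewrite <- rsum_plus. apply rsum_ext. intros i _.
      rewrite <- rsum_plus. apply rsum_ext. intros j _. unfold D. ring. }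
    assert (0 <= rsum k (fun i => rsum k (fun j => (a i * b j - a j * b i)^2))).
    { apply rsum_nonneg; intros; apply rsum_nonneg; intros. apply pow2_ge_0. }
    lra. }
  assert (rsum k (fun i => rsum k (fun j => D i j)) =
          rsum k (fun i => rsum k (fun j => a i ^ 2 * b j ^ 2)) -
          rsum k (fun i => rsum k (fun j => (a i * b i) * (a j * b j)))).
  { rewrite <- rsum_minus. apply rsum_ext. intros. rewrite <- rsum_minus. reflexivity. }
  lra.
Qed.

Lemma rsum_first' k f : (1 <= k)%nat -> rsum k f = f 0%nat + rsum (k - 1) (fun i => f (S i)).
Proof. intros H. destruct k; [lia|]. rewrite rsum_first. replace (S k - 1)%nat with k by lia. auto. Qed.

Set Bullet Behavior "Strict Subproofs".

Lemma isE_true n adj u v : isE n adj u v = true -> (u < n)%nat /\ (v < n)%nat /\ adj u v = true.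
Proof.
  unfold isE. intros H. apply andb_prop in H as [H1 H2]. apply andb_prop in H1 as [H1 H3].
  apply Nat.ltb_lt in H1. apply Nat.ltb_lt in H3. auto.
Qed.

Lemma isE_sym n adj u v : simple_graph n adj -> isE n adj u v = isE n adj v u.
Proof.
  intros [Hs _]. unfold isE. rewrite Hs.
  destruct (Nat.ltb u n), (Nat.ltb v n); reflexivity.
Qed.

Lemma isE_irrefl n adj u : simple_graph n adj -> isE n adj u u = false.
Proof. intros [_ Hi]. unfold isE. rewrite Hi. apply andb_false_r. Qed.

Lemma len_filter_rsum (p : nat -> bool) k :
  INR (length (filter p (seq 0 k))) = rsum k (fun w => if p w then 1 else 0).
Proof.
  induction k; [simpl; auto|].
  rewrite seq_S, filter_app, length_app, plus_INR, IHk. simpl.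
  destruct (p k); simpl; lra.
Qed.

Lemma nbr_sum n d adj x : regular n d adj -> (x < n)%nat ->
  rsum n (fun w => if isE n adj x w then 1 else 0) = INR d.
Proof. intros Hr Hx. rewrite <- len_filter_rsum. rewrite Hr; auto. Qed.

Lemma inner_ext n f f' g g' : (forall u, (u < n)%nat -> f u = f' u) ->
  (forall u, (u < n)%nat -> g u = g' u) -> inner n f g = inner n f' g'.
Proof. intros H1 H2. unfold inner. apply rsum_ext. intros. rewrite H1, H2; auto. Qed.

Lemma inner_sym n f g : inner n f g = inner n g f.
Proof. unfold inner. apply rsum_ext. intros; ring. Qed.

Section Spectral.
Context (n d : nat) (adj : nat -> nat -> bool) (lam : R) (mu : nat -> R) (vec : nat -> nat -> R).
Context (Hs : simple_graph n adj) (Hreg : regular n d adj) (Hd : (1 <= d)%nat) (Hn : (1 <= n)%nat).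
Context (Horth : forall i j, (i < n)%nat -> (j < n)%nat ->
        inner n (vec i) (vec j) = if Nat.eqb i j then 1 else 0).
Context (Heig : forall i u, (i < n)%nat -> (u < n)%nat -> Aop n d adj (vec i) u = mu i * vec i u).
Context (Hmu : forall i, (1 <= i)%nat -> (i < n)%nat -> Rabs (mu i) < lam).
Context (Hlam : lam < 1) (Hlam0 : 0 <= lam).

Let A := Aop n d adj.
Let W u w := if isE n adj u w then / INR d else 0.

Lemma dpos : 0 < INR d.
Proof. apply lt_0_INR. lia. Qed.

Lemma A_ext f g x : (forall w, (w < n)%nat -> f w = g w) -> A f x = A g x.
Proof. intros H. unfold A, Aop. apply rsum_ext. intros. rewrite H; auto. Qed.

Lemma A_one x : (x < n)%nat -> A (fun _ => 1) x = 1.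
Proof.
  intros Hx. unfold A, Aop.
  rewrite (rsum_ext _ _ (fun w => / INR d * (if isE n adj x w then 1 else 0))).
  - rewrite rsum_scal, (nbr_sum n d adj x Hreg Hx). field. apply Rgt_not_eq, dpos.
  - intros w _. destruct (isE n adj x w); ring.
Qed.

Lemma A_lin x f g a b : (x < n)%nat ->
  A (fun w => a * f w + b * g w) x = a * A f x + b * A g x.
Proof.
  intros Hx. unfold A, Aop. rewrite <- !rsum_scal, <- rsum_plus. apply rsum_ext. intros; ring.
Qed.

Lemma A_shift x f c : (x < n)%nat -> A (fun w => f w - c) x = A f x - c.
Proof.
  intros Hx. rewrite (A_ext _ (fun w => 1 * f w + (-c) * (fun _ => 1) w)).
  - rewrite A_lin, A_one by auto. ring.
  - intros; ring.
Qed.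

Lemma W_sym u w : W u w = W w u.
Proof. unfold W. rewrite isE_sym; auto. Qed.

Lemma A_sym f g : inner n (A f) g = inner n f (A g).
Proof.
  unfold inner, A, Aop.
  rewrite (rsum_ext _ _ (fun u => rsum n (fun w => W u w * f w * g u))).
  2:{ intros u _. rewrite <- rsum_scal_r. reflexivity. }
  rewrite rsum_swap. apply rsum_ext. intros w _.
  rewrite <- rsum_scal. apply rsum_ext. intros u _. fold (W w u). rewrite (W_sym w u).
  unfold W. ring.
Qed.

Lemma parseval g h : inner n g h = rsum n (fun j => inner n g (vec j) * inner n h (vec j)).
Proof.
  symmetry.
  unfold inner at 2 3.
  rewrite (rsum_ext _ _ (fun j => rsum n (fun u => rsum n (fun w => g u * h w * (vec j u * vec j w))))).
  2:{ intros j _. unfold inner. rewrite rsum_mult. apply rsum_ext. intros u _. apply rsum_ext. intros w _. ring. }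
  rewrite rsum_swap.
  unfold inner. apply rsum_ext. intros u Hu.
  rewrite rsum_swap.
  rewrite (rsum_ext _ _ (fun w => g u * h w * (if Nat.eqb u w then 1 else 0))).
  2:{ intros w Hw. rewrite rsum_scal. rewrite (completeness n vec Horth u w Hu Hw). reflexivity. }
  rewrite (rsum_ext _ _ (fun w => if Nat.eqb u w then g u * h w else 0)).
  2:{ intros w _. destruct (Nat.eqb u w); ring. }
  rewrite (rsum_delta n u (fun w => g u * h w)); auto.
Qed.


Lemma spec_main f :
  inner n (A f) (A f) <= lam^2 * inner n f f + (1 - lam^2) * (inner n f (fun _ => 1))^2 / INR n.
Proof.
  set (a := fun j => inner n f (vec j)).
  set (b := fun j => inner n (fun _ => 1) (vec j)).
  assert (HAv : forall g j, (j < n)%nat -> inner n (A g) (vec j) = mu j * inner n g (vec j)).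
  { intros g j Hj. rewrite A_sym. unfold inner. rewrite <- rsum_scal. apply rsum_ext.
    intros u Hu. unfold A. rewrite Heig by auto. ring. }
  assert (Hb : forall j, (j < n)%nat -> mu j * b j = b j).
  { intros j Hj. unfold b. rewrite <- HAv by auto. apply inner_ext; auto. intros; apply A_one; auto. }
  assert (Hb0 : forall j, (1 <= j)%nat -> (j < n)%nat -> b j = 0).
  { intros j H1 H2. specialize (Hb j H2). specialize (Hmu j H1 H2).
    assert (mu j < 1). { apply Rle_lt_trans with (Rabs (mu j)); [apply Rle_abs| lra]. }
    assert ((mu j - 1) * b j = 0) by lra.
    apply Rmult_integral in H0. destruct H0; lra. }
  assert (Pn : INR n = b 0%nat * b 0%nat).
  { assert (E := parseval (fun _ => 1) (fun _ => 1)). unfold inner at 1 in E.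
    rewrite (rsum_ext _ _ (fun _ => 1)) in E by (intros; ring).
    rewrite rsum_const in E. rewrite Rmult_1_r in E. rewrite E.
    rewrite (rsum_first' n _ Hn). rewrite (rsum_ext _ _ (fun _ => 0)).
    - rewrite rsum_zero. fold (b 0%nat). ring.
    - intros j Hj. fold (b (S j)). rewrite Hb0 by lia. ring. }
  assert (P1 : inner n f (fun _ => 1) = a 0%nat * b 0%nat).
  { rewrite parseval. rewrite (rsum_first' n _ Hn). rewrite (rsum_ext _ _ (fun _ => 0)).
    - rewrite rsum_zero. fold (a 0%nat) (b 0%nat). ring.
    - intros j Hj. fold (b (S j)). rewrite Hb0 by lia. ring. }
  assert (Hb0ne : b 0%nat <> 0).
  { intro E. rewrite E in Pn. assert (0 < INR n) by (apply lt_0_INR; lia). lra. }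
  assert (Hmu0 : mu 0%nat = 1).
  { specialize (Hb 0%nat ltac:(lia)).
    assert ((mu 0%nat - 1) * b 0%nat = 0) by lra. apply Rmult_integral in H. destruct H; lra. }
  assert (PA : inner n (A f) (A f) =
     (mu 0%nat * a 0%nat)^2 + rsum (n-1) (fun j => (mu (S j) * a (S j))^2)).
  { rewrite parseval. rewrite (rsum_first' n _ Hn). rewrite HAv by lia. fold (a 0%nat). f_equal.
    - ring.
    - apply rsum_ext. intros j Hj. rewrite HAv by lia. fold (a (S j)). ring. }
  assert (Pf : inner n f f = a 0%nat ^ 2 + rsum (n-1) (fun j => a (S j) ^ 2)).
  { rewrite parseval. rewrite (rsum_first' n _ Hn). fold (a 0%nat). f_equal.
    - ring.
    - apply rsum_ext. intros j Hj. fold (a (S j)). ring. }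
  assert (Hle : rsum (n-1) (fun j => (mu (S j) * a (S j))^2) <= lam^2 * rsum (n-1) (fun j => a (S j) ^ 2)).
  { rewrite <- rsum_scal. apply rsum_le. intros j Hj.
    specialize (Hmu (S j) ltac:(lia) ltac:(lia)).
    assert (mu (S j) ^ 2 <= lam ^ 2).
    { assert (Rabs (mu (S j)) ^ 2 <= lam ^2) by (apply pow_incr; split; [apply Rabs_pos|lra]).
      rewrite <- Rsqr_pow2, <- Rsqr_abs in *. rewrite Rsqr_pow2 in *. lra. }
    assert (0 <= a (S j) ^ 2) by apply pow2_ge_0.
    replace ((mu (S j) * a (S j))^2) with (mu (S j) ^ 2 * a (S j) ^ 2) by ring. nra. }
  rewrite PA, Pf, P1, Pn, Hmu0.
  replace ((a 0%nat * b 0%nat) ^ 2 / (b 0%nat * b 0%nat)) with (a 0%nat ^ 2) by (field; auto).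
  assert (0 <= lam^2 <= 1). { split; [apply pow2_ge_0| nra]. }
  assert (0 <= rsum (n-1) (fun j => a (S j) ^ 2)) by (apply rsum_nonneg; intros; apply pow2_ge_0).
  replace ((1 - lam^2) * (a 0%nat * b 0%nat) ^ 2 / (b 0%nat * b 0%nat))
     with ((1 - lam^2) * ((a 0%nat * b 0%nat) ^ 2 / (b 0%nat * b 0%nat))) by (field; auto).
  replace ((a 0%nat * b 0%nat) ^ 2 / (b 0%nat * b 0%nat)) with (a 0%nat ^ 2) by (field; auto).
  nra.
Qed.

End Spectral.

Set Bullet Behavior "Strict Subproofs".

Fixpoint cntU (k : nat) (U : nat -> bool) : nat :=
  match k with O => O | S k' => (cntU k' U + (if U k' then 1 else 0))%nat end.

Lemma cntU_rsum k U : INR (cntU k U) = rsum k (fun u => if U u then 1 else 0).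
Proof.
  induction k; simpl; auto. rewrite plus_INR, IHk. destruct (U k); simpl; lra.
Qed.

Lemma cntU_le k U : (cntU k U <= k)%nat.
Proof. induction k; simpl; auto. destruct (U k); lia. Qed.

Lemma cntU_mono k U V : (forall u, (u < k)%nat -> U u = true -> V u = true) -> (cntU k U <= cntU k V)%nat.
Proof.
  induction k; intros H; simpl; auto.
  assert (cntU k U <= cntU k V)%nat by (apply IHk; intros; apply H; auto; try lia).
  specialize (H k). destruct (U k), (V k); try lia.
Qed.

Lemma cntU_strict k U V a : (forall u, (u < k)%nat -> U u = true -> V u = true) ->
  (a < k)%nat -> U a = false -> V a = true -> (cntU k U < cntU k V)%nat.
Proof.
  induction k; intros H Ha HU HV; [lia|]. simpl.
  destruct (Nat.eq_dec a k).
  - subst. rewrite HU, HV.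
    assert (cntU k U <= cntU k V)%nat by (apply cntU_mono; intros; apply H; auto; try lia). lia.
  - assert (cntU k U < cntU k V)%nat by (apply IHk; auto; intros; try apply H; auto; lia).
    specialize (H k). destruct (U k), (V k); try lia.
Qed.

Lemma cntU_pos k U a : (a < k)%nat -> U a = true -> (1 <= cntU k U)%nat.
Proof.
  intros Ha HU. assert (cntU k (fun _ => false) < cntU k U)%nat.
  { apply (cntU_strict k _ _ a); auto. }
  lia.
Qed.

Fixpoint Apow (n d : nat) (adj : nat -> nat -> bool) (t : nat) (f : nat -> R) : nat -> R :=
  match t with O => f | S t' => fun x => Aop n d adj (Apow n d adj t' f) x end.

Fixpoint gseq (n d : nat) (adj : nat -> nat -> bool) (U : nat -> bool) (t : nat) : nat -> R :=
  match t with
  | O => fun x => if U x then 0 else 1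
  | S t' => fun x => if U x then 0 else Aop n d adj (gseq n d adj U t') x
  end.

Section Decay.
Context (n d : nat) (adj : nat -> nat -> bool) (lam : R).
Context (Hs : simple_graph n adj) (Hreg : regular n d adj) (Hd : (1 <= d)%nat) (Hn : (1 <= n)%nat).
Context (Hlam : lam < 1) (Hlam0 : 0 <= lam).
Context (Hspec : forall f, inner n (Aop n d adj f) (Aop n d adj f) <=
   lam^2 * inner n f f + (1 - lam^2) * (inner n f (fun _ => 1))^2 / INR n).

Let A := Aop n d adj.

Lemma A_mono f g x : (forall w, (w < n)%nat -> f w <= g w) -> A f x <= A g x.
Proof.
  intros H. unfold A, Aop. apply rsum_le. intros w Hw.
  assert (0 <= / INR d) by (apply Rlt_le, Rinv_0_lt_compat, lt_0_INR; lia).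
  specialize (H w Hw). destruct (isE n adj x w); nra.
Qed.

Lemma A_nonneg f x : (forall w, (w < n)%nat -> 0 <= f w) -> 0 <= A f x.
Proof.
  intros H. unfold A, Aop. apply rsum_nonneg. intros w Hw.
  assert (0 <= / INR d) by (apply Rlt_le, Rinv_0_lt_compat, lt_0_INR; lia).
  specialize (H w Hw). destruct (isE n adj x w); nra.
Qed.

Lemma A_one_le x : A (fun _ => 1) x <= 1.
Proof.
  destruct (Nat.lt_ge_cases x n).
  - unfold A. rewrite A_one; auto; lra.
  - unfold A, Aop. rewrite (rsum_ext _ _ (fun _ => 0)).
    + rewrite rsum_zero; lra.
    + intros w Hw. unfold isE. replace (Nat.ltb x n) with false by (symmetry; apply Nat.ltb_ge; lia).
      simpl. ring.
Qed.

Lemma g_bounds U t x : 0 <= gseq n d adj U t x <= 1.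
Proof.
  revert x. induction t; intros x; simpl; destruct (U x); try lra.
  split.
  - apply A_nonneg. intros; apply IHt.
  - apply Rle_trans with (A (fun _ => 1) x); [apply A_mono; intros; apply IHt| apply A_one_le].
Qed.

Lemma g_U U t x : U x = true -> gseq n d adj U t x = 0.
Proof. intros H. destruct t; simpl; rewrite H; auto. Qed.

Let chi (U : nat -> bool) := fun u : nat => if U u then 0 else 1.

Lemma g_chi U t u : gseq n d adj U t u = gseq n d adj U t u * chi U u.
Proof. unfold chi. destruct (U u) eqn:E; [rewrite g_U; auto; ring| ring]. Qed.

Lemma inner_g_one_sq U t :
  (inner n (gseq n d adj U t) (fun _ => 1))^2 <=
   (INR n - INR (cntU n U)) * inner n (gseq n d adj U t) (gseq n d adj U t).
Proof.
  set (g := gseq n d adj U t).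
  assert (E : inner n g (fun _ => 1) = rsum n (fun u => g u * chi U u)).
  { unfold inner. apply rsum_ext. intros u _. unfold g. rewrite g_chi at 1. ring. }
  rewrite E.
  eapply Rle_trans; [apply cauchy_schwarz|].
  assert (rsum n (fun i => chi U i ^ 2) = INR n - INR (cntU n U)).
  { rewrite cntU_rsum. rewrite <- (Rmult_1_r (INR n)), <- rsum_const, <- rsum_minus.
    apply rsum_ext. intros; unfold chi; destruct (U i); ring. }
  rewrite H. unfold inner.
  replace (rsum n (fun i => g i ^ 2)) with (rsum n (fun u => g u * g u)) by (apply rsum_ext; intros; ring).
  lra.
Qed.

Lemma g_decay U t :
  inner n (gseq n d adj U (S t)) (gseq n d adj U (S t)) <=
  (1 - (1 - lam^2) * INR (cntU n U) / INR n) * inner n (gseq n d adj U t) (gseq n d adj U t).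
Proof.
  set (g := gseq n d adj U t).
  assert (H1 : inner n (gseq n d adj U (S t)) (gseq n d adj U (S t)) <= inner n (A g) (A g)).
  { unfold inner. apply rsum_le. intros u _. simpl. destruct (U u).
    - fold A g. nra.
    - fold A g. lra. }
  specialize (Hspec g). fold A in Hspec.
  assert (H2 := inner_g_one_sq U t). fold g in H2.
  assert (Hnpos : 0 < INR n) by (apply lt_0_INR; lia).
  assert (0 <= 1 - lam^2) by nra.
  assert (0 <= inner n g g) by (apply rsum_nonneg; intros; nra).
  assert ((1 - lam ^ 2) * inner n g (fun _ => 1) ^ 2 / INR n <=
          (1 - lam ^ 2) * ((INR n - INR (cntU n U)) * inner n g g) / INR n).
  { unfold Rdiv. apply Rmult_le_compat_r; [apply Rlt_le, Rinv_0_lt_compat; auto|].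
    apply Rmult_le_compat_l; auto. }
  assert ((1 - lam ^ 2) * ((INR n - INR (cntU n U)) * inner n g g) / INR n =
          (1 - lam^2) * inner n g g - (1 - lam ^ 2) * INR (cntU n U) / INR n * inner n g g)
   by (field; lra).
  assert ((1 - (1 - lam ^ 2) * INR (cntU n U) / INR n) * inner n g g =
          inner n g g - (1 - lam ^ 2) * INR (cntU n U) / INR n * inner n g g) by ring.
  lra.
Qed.


Lemma inner_nonneg f : 0 <= inner n f f.
Proof. apply rsum_nonneg; intros; nra. Qed.

Lemma g_norm_iter U s :
  inner n (gseq n d adj U s) (gseq n d adj U s) <=
  (1 - (1 - lam^2) * INR (cntU n U) / INR n) ^ s * INR n.
Proof.
  assert (Hnpos : 0 < INR n) by (apply lt_0_INR; lia).
  assert (Hk : INR (cntU n U) <= INR n) by (apply le_INR, cntU_le).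
  assert (Hk0 : 0 <= INR (cntU n U)) by apply pos_INR.
  assert (Hal : 0 <= (1 - lam^2) * INR (cntU n U) / INR n <= 1).
  { split.
    - apply Rmult_le_pos; [apply Rmult_le_pos; nra| apply Rlt_le, Rinv_0_lt_compat; auto].
    - apply (Rmult_le_reg_r (INR n)); auto. unfold Rdiv. rewrite Rmult_assoc, Rinv_l by lra. nra. }
  induction s.
  - rewrite pow_O, Rmult_1_l. unfold inner.
    rewrite <- (Rmult_1_r (INR n)), <- rsum_const. apply rsum_le. intros u _.
    destruct (g_bounds U 0 u). nra.
  - eapply Rle_trans; [apply g_decay|]. simpl.
    rewrite Rmult_assoc. apply Rmult_le_compat_l; [lra| auto].
Qed.

Lemma Apow_nonneg f t x : (forall w, (w < n)%nat -> 0 <= f w) -> (x < n)%nat -> 0 <= Apow n d adj t f x.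
Proof.
  intros Hf Hx. revert x Hx. induction t; intros x Hx; simpl; auto.
  apply A_nonneg. intros; apply IHt; auto.
Qed.

Lemma g_le_Apow U s j x : (x < n)%nat -> gseq n d adj U (s + j) x <= Apow n d adj j (gseq n d adj U s) x.
Proof.
  revert x. induction j; intros x Hx.
  - rewrite Nat.add_0_r. simpl. lra.
  - rewrite Nat.add_succ_r. simpl. destruct (U x).
    + apply Apow_nonneg with (t := S j); auto. intros; apply g_bounds.
    + apply A_mono. intros w Hw. apply IHj; auto.
Qed.

Lemma D_bound f t x : (x < n)%nat ->
  (Apow n d adj t f x - inner n f (fun _ => 1) / INR n)^2 <= (lam^2)^t * inner n f f.
Proof.
  intros Hx.
  assert (Hnpos : 0 < INR n) by (apply lt_0_INR; lia).
  set (c := inner n f (fun _ => 1) / INR n).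
  set (D := fun t x => Apow n d adj t f x - c).
  assert (HD1 : forall t, inner n (D t) (fun _ => 1) = 0).
  { induction t0.
    - unfold D. simpl. unfold inner. rewrite (rsum_ext _ _ (fun u => f u * 1 - c)) by (intros; ring).
      rewrite rsum_minus, rsum_const. fold (inner n f (fun _ => 1)). unfold c. field. lra.
    - rewrite (inner_ext n (D (S t0)) (A (D t0)) (fun _ => 1) (fun _ => 1)).
      + unfold A. rewrite A_sym; auto. rewrite <- IHt0. apply inner_ext; auto.
        intros; apply A_one; auto.
      + intros u Hu. unfold D, A. simpl. rewrite A_shift; auto.
      + auto. }
  assert (HD2 : forall t, inner n (D t) (D t) <= (lam^2)^t * inner n (D 0%nat) (D 0%nat)).
  { induction t0.
    - simpl. lra.
    - rewrite (inner_ext n (D (S t0)) (A (D t0)) (D (S t0)) (A (D t0))).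
      + eapply Rle_trans; [apply Hspec|]. rewrite HD1.
        replace ((1 - lam ^ 2) * 0 ^ 2 / INR n) with 0 by (field; lra).
        replace ((lam^2)^(S t0)) with (lam^2 * (lam^2)^t0) by reflexivity. rewrite Rplus_0_r, Rmult_assoc. apply Rmult_le_compat_l; [nra|auto].
      + intros u Hu. unfold D, A. simpl. rewrite A_shift; auto.
      + intros u Hu. unfold D, A. simpl. rewrite A_shift; auto. }
  assert (HD0 : inner n (D 0%nat) (D 0%nat) <= inner n f f).
  { unfold D. simpl. unfold inner.
    rewrite (rsum_ext _ _ (fun u => f u * f u - (2 * c) * (f u * 1) + c * c)) by (intros; ring).
    rewrite rsum_plus, rsum_minus, rsum_scal, rsum_const.
    fold (inner n f (fun _ => 1)). fold (inner n f f).
    assert (inner n f (fun _ => 1) = c * INR n) by (unfold c; field; lra).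
    rewrite H. nra. }
  assert (Hpt : (D t x)^2 <= inner n (D t) (D t)).
  { unfold inner. replace ((D t x)^2) with (D t x * D t x) by ring.
    apply (rsum_single_le n (fun u => D t u * D t u)); auto. intros; nra. }
  assert (0 <= (lam^2)^t) by (apply pow_le; nra).
  change ((D t x)^2 <= (lam^2)^t * inner n f f).
  specialize (HD2 t). assert ((lam^2)^t * inner n (D 0%nat) (D 0%nat) <= (lam^2)^t * inner n f f) by (apply Rmult_le_compat_l; auto). lra.
Qed.

Lemma c_bound f : (inner n f (fun _ => 1) / INR n)^2 <= inner n f f / INR n.
Proof.
  assert (Hnpos : 0 < INR n) by (apply lt_0_INR; lia).
  assert (H : (inner n f (fun _ => 1))^2 <= inner n f f * INR n).
  { assert (H0 := cauchy_schwarz n f (fun _ => 1)).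
    assert (E1 : rsum n (fun i => (fun _ : nat => 1) i ^ 2) = INR n)
      by (rewrite <- (Rmult_1_r (INR n)), <- rsum_const; apply rsum_ext; intros; simpl; ring).
    assert (E2 : rsum n (fun i => f i ^ 2) = inner n f f) by (unfold inner; apply rsum_ext; intros; ring).
    change ((rsum n (fun i => f i * 1))^2 <= rsum n (fun i => f i ^ 2) * rsum n (fun i => 1 ^ 2)) in H0.
    rewrite E1, E2 in H0. exact H0. }
  replace ((inner n f (fun _ => 1) / INR n)^2) with ((inner n f (fun _ => 1))^2 / (INR n * INR n)) by (field; lra).
  apply (Rmult_le_reg_r (INR n * INR n)); [nra|].
  unfold Rdiv. rewrite Rmult_assoc, Rinv_l by nra.
  replace (inner n f f * / INR n * (INR n * INR n)) with (inner n f f * INR n) by (field; lra). lra.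
Qed.

Lemma hit_half U s t0 x : (x < n)%nat ->
  (1 - (1 - lam^2) * INR (cntU n U) / INR n) ^ s <= 1/16 ->
  (lam^2)^t0 * INR n <= 1/16 ->
  gseq n d adj U (s + t0) x <= 1/2.
Proof.
  intros Hx H1 H2.
  assert (Hnpos : 0 < INR n) by (apply lt_0_INR; lia).
  set (f := gseq n d adj U s).
  assert (Hf := g_norm_iter U s). fold f in Hf.
  assert (Hc := c_bound f).
  assert (HD := D_bound f t0 x Hx).
  eapply Rle_trans; [apply g_le_Apow; auto|]. fold f.
  set (c := inner n f (fun _ => 1) / INR n) in *.
  assert (Hc2 : c^2 <= 1/16).
  { eapply Rle_trans; [apply Hc|]. apply (Rmult_le_reg_r (INR n)); auto.
    unfold Rdiv at 1. rewrite Rmult_assoc, Rinv_l by lra. nra. }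
  assert (0 <= (1 - (1 - lam ^ 2) * INR (cntU n U) / INR n) ^ s) as Hp0.
  { apply pow_le.
    assert (INR (cntU n U) <= INR n) by (apply le_INR, cntU_le).
    assert ((1 - lam ^ 2) * INR (cntU n U) / INR n <= 1).
    { apply (Rmult_le_reg_r (INR n)); auto. unfold Rdiv. rewrite Rmult_assoc, Rinv_l by lra.
      assert (0 <= INR (cntU n U)) by apply pos_INR. nra. }
    lra. }
  assert (Hff : inner n f f <= INR n) by nra.
  assert (0 <= (lam^2)^t0) by (apply pow_le; nra).
  assert (HD2 : (Apow n d adj t0 f x - c)^2 <= 1/16) by nra.
  assert (forall y, y^2 <= 1/16 -> y <= 1/4).
  { intros y Hy. destruct (Rle_lt_dec y (1/4)); auto. nra. }
  assert (c <= 1/4) by auto.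
  assert (Apow n d adj t0 f x - c <= 1/4) by auto.
  lra.
Qed.

End Decay.

Set Bullet Behavior "Strict Subproofs".

Lemma steps_app a h w : steps ((a :: h) ++ [w]) = steps (a :: h) ++ [(last (a :: h) 0%nat, w)].
Proof.
  revert a. induction h as [|b h IH]; intros a; simpl; auto.
  f_equal. specialize (IH b). simpl in IH. rewrite IH. destruct h; reflexivity.
Qed.

Lemma traversed_app h w u v : h <> [] ->
  traversed (h ++ [w]) u v = traversed h u v || same_edge (cur h, w) u v.
Proof.
  intros Hh. destruct h as [|a h]; [congruence|].
  unfold traversed. rewrite steps_app, existsb_app. simpl. unfold cur.
  rewrite orb_false_r. reflexivity.
Qed.

Lemma cur_app h w : cur (h ++ [w]) = w.
Proof. unfold cur. apply last_last. Qed.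

Lemma same_edge_sym e u v : same_edge e u v = same_edge e v u.
Proof. unfold same_edge. apply orb_comm. Qed.

Lemma traversed_sym h u v : traversed h u v = traversed h v u.
Proof.
  unfold traversed. induction (steps h); simpl; auto. rewrite same_edge_sym, IHl. reflexivity.
Qed.

Lemma app_nonnil (h ws : list nat) : h <> [] -> h ++ ws <> [].
Proof. intros H E. apply app_eq_nil in E. tauto. Qed.

Lemma traversed_mono h ws u v : h <> [] -> traversed h u v = true -> traversed (h ++ ws) u v = true.
Proof.
  revert h. induction ws as [|w ws IH]; intros h Hh Ht.
  - rewrite app_nil_r. auto.
  - replace (h ++ w :: ws) with ((h ++ [w]) ++ ws) by (rewrite <- app_assoc; reflexivity).
    apply IH. apply app_nonnil; auto. rewrite traversed_app by auto. rewrite Ht. reflexivity.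
Qed.

Lemma covered_iff n adj p :
  covered n adj p = true <-> (forall u v, isE n adj u v = true -> traversed p u v = true).
Proof.
  unfold covered. rewrite forallb_forall. split.
  - intros H u v Huv. destruct (isE_true _ _ _ _ Huv) as [Hu [Hv _]].
    assert (Iu : In u (seq 0 n)) by (apply in_seq; lia).
    assert (Iv : In v (seq 0 n)) by (apply in_seq; lia).
    specialize (H u Iu). rewrite forallb_forall in H.
    specialize (H v Iv). rewrite Huv in H. exact H.
  - intros H u _. rewrite forallb_forall. intros v _.
    destruct (isE n adj u v) eqn:E; simpl; auto.
Qed.

Lemma covered_mono n adj h ws : h <> [] -> covered n adj h = true -> covered n adj (h ++ ws) = true.
Proof.
  intros Hh. rewrite !covered_iff. intros H u v Huv. apply traversed_mono; auto.
Qed.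

Lemma lsum_app l1 l2 : lsum (l1 ++ l2) = lsum l1 + lsum l2.
Proof. induction l1; simpl; [lra| rewrite IHl1; lra]. Qed.

Lemma lsum_seq (F : nat -> R) k : lsum (map F (seq 0 k)) = rsum k F.
Proof.
  induction k; auto. rewrite seq_S, map_app, lsum_app, IHk. simpl. lra.
Qed.

Lemma lsum_flat_map {A B : Type} (f : B -> R) (g : A -> list B) (l : list A) :
  lsum (map f (flat_map g l)) = lsum (map (fun a => lsum (map f (g a))) l).
Proof.
  induction l; simpl; auto. rewrite map_app, lsum_app, IHl. reflexivity.
Qed.

Lemma lsum_all_seqs_S n t (f : list nat -> R) :
  lsum (map f (all_seqs n (S t))) = rsum n (fun w => lsum (map (fun ws => f (w :: ws)) (all_seqs n t))).
Proof.
  simpl. rewrite lsum_flat_map, <- lsum_seq. f_equal. apply map_ext. intros w.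
  rewrite map_map. reflexivity.
Qed.

Lemma lsum_all_seqs_0 n (f : list nat -> R) : lsum (map f (all_seqs n 0)) = f [].
Proof. simpl. lra. Qed.

Lemma lsum_map_ext_in {A : Type} (f g : A -> R) l : (forall x, In x l -> f x = g x) ->
  lsum (map f l) = lsum (map g l).
Proof. intros H. f_equal. apply map_ext_in. auto. Qed.

Lemma lsum_map_minus {A : Type} (f g : A -> R) l :
  lsum (map (fun x => f x - g x) l) = lsum (map f l) - lsum (map g l).
Proof. induction l; simpl; [lra| rewrite IHl; lra]. Qed.

Lemma all_seqs_nonnil n t ws : In ws (all_seqs n (S t)) -> ws <> [].
Proof.
  simpl. intros H. apply in_flat_map in H as [w [_ Hw]]. apply in_map_iff in Hw as [ws' [E _]].
  subst. discriminate.
Qed.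

Lemma lsum_map_scal {A : Type} (c : R) (f : A -> R) l :
  lsum (map (fun x => c * f x) l) = c * lsum (map f l).
Proof. induction l; simpl; [lra| rewrite IHl; lra]. Qed.

Lemma rsum_le_ext k f g : (forall i, (i < k)%nat -> f i <= g i) -> rsum k f <= rsum k g.
Proof. apply rsum_le. Qed.

Section Walk.
Context (n d : nat) (adj : nat -> nat -> bool) (Rl : rule).
Context (Hs : simple_graph n adj) (Hreg : regular n d adj) (Hd : (1 <= d)%nat)
        (Hval : valid_rule n adj Rl).

Let P := pprob n d adj Rl.
Let tr := trans n d adj Rl.

Lemma trans_nonneg h w : 0 <= tr h w.
Proof.
  unfold tr, trans. destruct (has_unused n adj h) eqn:E.
  - apply (Hval h E).
  - destruct (isE n adj (cur h) w); [|lra]. apply Rlt_le, Rinv_0_lt_compat, lt_0_INR. lia.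
Qed.

Lemma trans_sum h : (cur h < n)%nat -> rsum n (tr h) = 1.
Proof.
  intros Hx. unfold tr, trans. destruct (has_unused n adj h) eqn:E.
  - apply (Hval h E).
  - rewrite (rsum_ext _ _ (fun w => / INR d * (if isE n adj (cur h) w then 1 else 0))).
    + rewrite rsum_scal, (nbr_sum n d adj (cur h) Hreg Hx). field.
      apply Rgt_not_eq, lt_0_INR. lia.
    + intros w _. destruct (isE n adj (cur h) w); ring.
Qed.

Lemma trans_support h w : tr h w <> 0 -> (w < n)%nat.
Proof.
  unfold tr, trans. destruct (has_unused n adj h) eqn:E.
  - intros H. apply (Hval h E) in H. unfold unused_at in H.
    apply andb_prop in H as [H _]. apply isE_true in H. tauto.
  - destruct (isE n adj (cur h) w) eqn:E2.
    + intros _. apply isE_true in E2. tauto.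
    + intros H; lra.
Qed.

Definition Ncov t h := lsum (map (fun ws => P h ws * (if covered n adj (h ++ ws) then 0 else 1)) (all_seqs n t)).
Definition Mass t h := lsum (map (fun ws => P h ws) (all_seqs n t)).
Definition Xeq t h := lsum (map (fun ws => P h ws *
   (if covered n adj (h ++ ws) && negb (covered n adj (removelast (h ++ ws))) then 1 else 0)) (all_seqs n t)).

Lemma P_cons h w ws : P h (w :: ws) = tr h w * P (h ++ [w]) ws.
Proof. reflexivity. Qed.

Lemma app_cons_assoc (h : list nat) w ws : h ++ w :: ws = (h ++ [w]) ++ ws.
Proof. rewrite <- app_assoc. reflexivity. Qed.

Lemma Ncov_S t h : Ncov (S t) h = rsum n (fun w => tr h w * Ncov t (h ++ [w])).
Proof.
  unfold Ncov. rewrite lsum_all_seqs_S. apply rsum_ext. intros w _.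
  rewrite <- lsum_map_scal. f_equal. apply map_ext. intros ws.
  rewrite P_cons, (app_cons_assoc h w ws). ring.
Qed.

Lemma Mass_S t h : Mass (S t) h = rsum n (fun w => tr h w * Mass t (h ++ [w])).
Proof.
  unfold Mass. rewrite lsum_all_seqs_S. apply rsum_ext. intros w _.
  rewrite <- lsum_map_scal. f_equal.
Qed.

Lemma Xeq_S t h : Xeq (S t) h = rsum n (fun w => tr h w * Xeq t (h ++ [w])).
Proof.
  unfold Xeq. rewrite lsum_all_seqs_S. apply rsum_ext. intros w _.
  rewrite <- lsum_map_scal. f_equal. apply map_ext. intros ws.
  rewrite P_cons, (app_cons_assoc h w ws). ring.
Qed.

Lemma Ncov_0 h : Ncov 0 h = if covered n adj h then 0 else 1.
Proof. unfold Ncov. rewrite lsum_all_seqs_0. unfold P. simpl. rewrite app_nil_r. destruct (covered n adj h); ring. Qed.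

Lemma Xeq_0 h : Xeq 0 h = if covered n adj h && negb (covered n adj (removelast h)) then 1 else 0.
Proof. unfold Xeq. rewrite lsum_all_seqs_0. unfold P. simpl. rewrite app_nil_r. destruct (_ && _); ring. Qed.

Lemma Mass_one t h : (cur h < n)%nat -> Mass t h = 1.
Proof.
  revert h. induction t; intros h Hh.
  - unfold Mass. rewrite lsum_all_seqs_0. reflexivity.
  - rewrite Mass_S. rewrite <- (trans_sum h Hh). apply rsum_ext. intros w Hw.
    rewrite IHt; [ring|]. rewrite cur_app. auto.
Qed.

Lemma Ncov_nonneg t h : 0 <= Ncov t h.
Proof.
  revert h. induction t; intros h.
  - rewrite Ncov_0. destruct (covered n adj h); lra.
  - rewrite Ncov_S. apply rsum_nonneg. intros. apply Rmult_le_pos; auto. apply trans_nonneg.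
Qed.

Lemma Ncov_covered t h : h <> [] -> covered n adj h = true -> Ncov t h = 0.
Proof.
  revert h. induction t; intros h Hh Hc.
  - rewrite Ncov_0, Hc. reflexivity.
  - rewrite Ncov_S. rewrite (rsum_ext _ _ (fun _ => 0)); [apply rsum_zero|].
    intros w _. rewrite IHt; [ring| apply app_nonnil; auto| apply covered_mono; auto].
Qed.

Lemma Xeq_covered t h : h <> [] -> covered n adj h = true -> Xeq (S t) h = 0.
Proof.
  revert h. induction t; intros h Hh Hc.
  - rewrite Xeq_S. rewrite (rsum_ext _ _ (fun _ => 0)); [apply rsum_zero|].
    intros w _. rewrite Xeq_0, removelast_last, Hc. rewrite andb_false_r. ring.
  - rewrite Xeq_S. rewrite (rsum_ext _ _ (fun _ => 0)); [apply rsum_zero|].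
    intros w _. rewrite IHt; [ring| apply app_nonnil; auto| apply covered_mono; auto].
Qed.

Lemma Ncov_mono t h : h <> [] -> (cur h < n)%nat -> Ncov (S t) h <= Ncov t h.
Proof.
  revert h. induction t; intros h Hh Hx.
  - rewrite Ncov_S, Ncov_0. destruct (covered n adj h) eqn:Hc.
    + rewrite (rsum_ext _ _ (fun _ => 0)); [rewrite rsum_zero; lra|].
      intros w _. rewrite Ncov_0, covered_mono by auto. ring.
    + rewrite <- (trans_sum h Hx). apply rsum_le. intros w _.
      rewrite Ncov_0. assert (0 <= tr h w) by apply trans_nonneg.
      destruct (covered n adj (h ++ [w])); lra.
  - rewrite (Ncov_S (S t)), (Ncov_S t). apply rsum_le. intros w Hw.
    apply Rmult_le_compat_l; [apply trans_nonneg|]. apply IHt.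
    + apply app_nonnil; auto.
    + rewrite cur_app; auto.
Qed.

Lemma Xeq_bound t h : h <> [] -> (cur h < n)%nat -> Xeq (S t) h <= Ncov t h - Ncov (S t) h.
Proof.
  revert h. induction t; intros h Hh Hx.
  - destruct (covered n adj h) eqn:Hc.
    + rewrite Xeq_covered, !Ncov_covered by auto. lra.
    + rewrite Xeq_S, Ncov_S, Ncov_0, Hc.
      rewrite <- (trans_sum h Hx). rewrite <- rsum_minus. apply rsum_le. intros w _.
      rewrite Xeq_0, Ncov_0, removelast_last, Hc. simpl.
      destruct (covered n adj (h ++ [w])); simpl; lra.
  - rewrite (Xeq_S (S t)), (Ncov_S (S t)), (Ncov_S t), <- rsum_minus. apply rsum_le. intros w Hw.
    rewrite <- Rmult_minus_distr_l. apply Rmult_le_compat_l; [apply trans_nonneg|]. apply IHt.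
    + apply app_nonnil; auto.
    + rewrite cur_app; auto.
Qed.

Section Potential.
Context (Phi : list nat -> R).
Context (Phi_nonneg : forall h, 0 <= Phi h).
Context (Phi_drift : forall h, h <> [] -> (cur h < n)%nat -> covered n adj h = false ->
   1 + rsum n (fun w => tr h w * Phi (h ++ [w])) <= Phi h).

Lemma Ncov_sum_bound T h : h <> [] -> (cur h < n)%nat -> rsum T (fun t => Ncov t h) <= Phi h.
Proof.
  revert h. induction T; intros h Hh Hx.
  - simpl. apply Phi_nonneg.
  - destruct (covered n adj h) eqn:Hc.
    + rewrite (rsum_ext _ _ (fun _ => 0)) by (intros; apply Ncov_covered; auto).
      rewrite rsum_zero. apply Phi_nonneg.
    + rewrite rsum_first, Ncov_0, Hc.
      rewrite (rsum_ext _ _ (fun t => rsum n (fun w => tr h w * Ncov t (h ++ [w])))) by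
        (intros; apply Ncov_S).
      rewrite <- rsum_swap.
      eapply Rle_trans; [|apply Phi_drift; auto].
      apply Rplus_le_compat_l. apply rsum_le. intros w Hw.
      rewrite rsum_scal. apply Rmult_le_compat_l; [apply trans_nonneg|].
      apply IHT; [apply app_nonnil; auto| rewrite cur_app; auto].
Qed.


Lemma Ncov_anti h t T : h <> [] -> (cur h < n)%nat -> (t <= T)%nat -> Ncov T h <= Ncov t h.
Proof.
  intros Hh Hx Hle. induction Hle; [lra|].
  eapply Rle_trans; [apply Ncov_mono; auto| auto].
Qed.

Lemma telescope (N : nat -> R) T :
  rsum T (fun t => INR (S t) * (N t - N (S t))) = rsum T N - INR T * N T.
Proof.
  induction T; [simpl; ring|]. cbn [rsum]. rewrite IHT. rewrite S_INR. ring.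
Qed.

Lemma expected_of_potential v0 B : (v0 < n)%nat -> Phi [v0] <= B -> expected_cover_le n d adj Rl v0 B.
Proof.
  intros Hv HB.
  assert (Hh : [v0] <> []) by discriminate.
  assert (Hx : (cur [v0] < n)%nat) by (unfold cur; simpl; auto).
  assert (Hsum : forall T, rsum T (fun t => Ncov t [v0]) <= Phi [v0]) by (intros; apply Ncov_sum_bound; auto).
  assert (HTN : forall T, INR T * Ncov T [v0] <= Phi [v0]).
  { intros T. eapply Rle_trans; [|apply (Hsum T)].
    rewrite <- rsum_const. apply rsum_le. intros t Ht. apply Ncov_anti; auto; lia. }
  split.
  - intros eps Heps.
    destruct (INR_archimed eps (Phi [v0]) Heps) as [T HT].
    exists T.
    assert (E : prob_cover_le n d adj Rl v0 T = Mass T [v0] - Ncov T [v0]).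
    { unfold prob_cover_le, Mass, Ncov. rewrite <- lsum_map_minus. apply lsum_map_ext_in.
      intros ws _. simpl. destruct (covered n adj (v0 :: ws)); unfold P; ring. }
    rewrite E, Mass_one by auto.
    assert (HT0 : 0 < INR T).
    { destruct T; [simpl in HT; specialize (Phi_nonneg [v0]); lra| apply lt_0_INR; lia]. }
    specialize (HTN T).
    assert (INR T * Ncov T [v0] < INR T * eps) by lra.
    assert (Ncov T [v0] < eps) by (apply Rmult_lt_reg_l with (INR T); auto).
    lra.
  - intros T. rewrite rsum_first. simpl (INR 0). rewrite Rmult_0_l, Rplus_0_l.
    eapply Rle_trans; [|apply HB].
    eapply Rle_trans with (rsum T (fun t => INR (S t) * (Ncov t [v0] - Ncov (S t) [v0]))).
    + apply rsum_le. intros t _.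
      assert (E : prob_cover_eq n d adj Rl v0 (S t) = Xeq (S t) [v0]).
      { unfold prob_cover_eq, Xeq. apply lsum_map_ext_in. intros ws Hws.
        destruct ws as [|w ws]; [exfalso; apply (all_seqs_nonnil n t [] Hws); auto|].
        reflexivity. }
      rewrite E. apply Rmult_le_compat_l; [apply pos_INR|]. apply Xeq_bound; auto.
    + rewrite telescope. specialize (Hsum T).
      assert (0 <= INR T * Ncov T [v0]) by (apply Rmult_le_pos; [apply pos_INR| apply Ncov_nonneg]).
      lra.
Qed.

End Potential.

End Walk.

Set Bullet Behavior "Strict Subproofs".

Definition ceilN (r : R) : nat := Z.to_nat (up r).

Lemma ceilN_spec r : 0 <= r -> r <= INR (ceilN r) <= r + 1.
Proof.
  intros Hr. destruct (archimed r) as [H1 H2].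
  assert (Hz : (0 <= up r)%Z).
  { apply le_IZR. simpl. lra. }
  unfold ceilN. rewrite INR_IZR_INZ, Z2Nat.id by auto. lra.
Qed.

Lemma bernoulli a t : 0 <= a <= 1 -> (1 - a)^t * (1 + INR t * a) <= 1.
Proof.
  intros Ha. induction t.
  - simpl. lra.
  - rewrite S_INR. simpl.
    assert (0 <= (1 - a)^t) by (apply pow_le; lra).
    assert ((1 - a) * (1 + (INR t + 1) * a) <= 1 + INR t * a).
    { assert (0 <= INR t) by apply pos_INR. nra. }
    assert ((1 - a) ^ t * ((1 - a) * (1 + (INR t + 1) * a)) <= (1 - a)^t * (1 + INR t * a))
      by (apply Rmult_le_compat_l; auto).
    nra.
Qed.

Lemma ln_le_sub1 y : 0 < y -> ln y <= y - 1.
Proof. intros Hy. assert (H := exp_ineq1_le (ln y)). rewrite exp_ln in H; lra. Qed.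

Lemma ln_mono x y : 0 < x -> x <= y -> ln x <= ln y.
Proof.
  intros Hx Hxy. destruct (Req_dec x y); [subst; lra|].
  apply Rlt_le, ln_increasing; lra.
Qed.

Lemma harmonic N : (1 <= N)%nat -> rsum N (fun j => / INR (S j)) <= 1 + ln (INR N).
Proof.
  intros HN. induction HN.
  - simpl. rewrite ln_1. lra.
  - cbn [rsum]. 
    assert (Hm : 0 < INR m) by (apply lt_0_INR; lia).
    assert (/ INR (S m) <= ln (INR (S m)) - ln (INR m)).
    { rewrite S_INR.
      assert (E : ln (INR m + 1) - ln (INR m) = - ln (INR m / (INR m + 1))).
      { unfold Rdiv. rewrite ln_mult, ln_Rinv by (try apply Rinv_0_lt_compat; lra). ring. }
      rewrite E. assert (H := ln_le_sub1 (INR m / (INR m + 1)) ltac:(apply Rdiv_lt_0_compat; lra)).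
      assert (INR m / (INR m + 1) - 1 = - / (INR m + 1)) by (field; lra).
      lra. }
    lra.
Qed.

Definition t1c (lam : R) : nat := ceilN (1 / (1 - lam)).
Definition mmc (n : nat) : nat := ceilN (ln (16 * INR n) / ln 4).
Definition t0c (n : nat) (lam : R) : nat := (t1c lam * mmc n)%nat.
Definition sK (n : nat) (lam : R) (k : nat) : nat := ceilN (15 * INR n / ((1 - lam) * INR k)).
Definition TK (n : nat) (lam : R) (k : nat) : nat :=
  match k with O => O | S _ => (sK n lam k + t0c n lam)%nat end.
Definition MK (n : nat) (lam : R) (k : nat) : R := 2 * INR (TK n lam k).
Definition Fs (n : nat) (lam : R) (k : nat) : R := rsum k (MK n lam).

Lemma ln2_pos : / 2 < ln 2.
Proof. apply ln_lt_2. Qed.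

Lemma ln4_eq : ln 4 = 2 * ln 2.
Proof. replace 4 with (2 ^ 2) by (simpl; lra). rewrite ln_pow by lra. simpl. ring. Qed.

Lemma ln16_eq : ln 16 = 4 * ln 2.
Proof. replace 16 with (2 ^ 4) by (simpl; lra). rewrite ln_pow by lra. simpl. ring. Qed.

Section Consts.
Context (n : nat) (lam : R) (Hn2 : (2 <= n)%nat) (Hl0 : 0 <= lam) (Hl1 : lam < 1).

Lemma a_pos : 0 < 1 - lam.
Proof. lra. Qed.

Lemma lam_t1 : lam ^ t1c lam <= 1/2.
Proof.
  assert (H := bernoulli (1 - lam) (t1c lam) ltac:(lra)).
  replace (1 - (1 - lam)) with lam in H by ring.
  assert (Hc := ceilN_spec (1 / (1 - lam)) ltac:(apply Rlt_le, Rdiv_lt_0_compat; lra)).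
  fold (t1c lam) in Hc.
  assert (INR (t1c lam) * (1 - lam) >= 1).
  { destruct Hc as [Hc _]. apply Rle_ge.
    apply Rle_trans with (1 / (1 - lam) * (1 - lam)); [right; field; lra|].
    apply Rmult_le_compat_r; lra. }
  assert (0 <= lam ^ t1c lam) by (apply pow_le; lra).
  nra.
Qed.

Lemma t0_bound : (lam ^ 2) ^ t0c n lam * INR n <= 1 / 16.
Proof.
  assert (Hn : 2 <= INR n) by (replace 2 with (INR 2) by (simpl; lra); apply le_INR; auto).
  unfold t0c. rewrite pow_mult.
  assert (Hq : (lam ^ 2) ^ t1c lam <= 1/4).
  { rewrite <- pow_mult, Nat.mul_comm, pow_mult.
    assert (H := lam_t1). assert (0 <= lam ^ t1c lam) by (apply pow_le; lra).
    simpl. nra. }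
  assert (Hq0 : 0 <= (lam ^ 2) ^ t1c lam) by (apply pow_le; nra).
  assert (Hpow : ((lam ^ 2) ^ t1c lam) ^ mmc n <= (1/4) ^ mmc n) by (apply pow_incr; lra).
  assert (H4 : 16 * INR n <= 4 ^ mmc n).
  { assert (Hc := ceilN_spec (ln (16 * INR n) / ln 4)).
    assert (Hl4 : 0 < ln 4) by (rewrite ln4_eq; assert (H := ln2_pos); lra).
    assert (0 <= ln (16 * INR n) / ln 4).
    { apply Rmult_le_pos; [|apply Rlt_le, Rinv_0_lt_compat; auto].
      rewrite <- ln_1. apply ln_mono; lra. }
    destruct (Hc H) as [Hc1 _]. fold (mmc n) in Hc1.
    destruct (Rle_lt_dec (16 * INR n) (4 ^ mmc n)) as [Hle|Hlt]; auto.
    exfalso.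
    assert (ln (4 ^ mmc n) < ln (16 * INR n)) by (apply ln_increasing; auto; apply pow_lt; lra).
    rewrite ln_pow in H0 by lra.
    assert (ln (16 * INR n) / ln 4 * ln 4 = ln (16 * INR n)) by (field; lra).
    assert (ln (16 * INR n) / ln 4 * ln 4 <= INR (mmc n) * ln 4) by (apply Rmult_le_compat_r; lra).
    lra. }
  assert (Hp4 : 0 < 4 ^ mmc n) by (apply pow_lt; lra).
  replace ((1/4) ^ mmc n) with (/ 4 ^ mmc n) in Hpow by (unfold Rdiv; rewrite Rmult_1_l, pow_inv; reflexivity).
  apply Rle_trans with (/ 4 ^ mmc n * INR n).
  - apply Rmult_le_compat_r; [lra| auto].
  - apply (Rmult_le_reg_l (4 ^ mmc n)); auto.
    rewrite <- Rmult_assoc, Rinv_r by lra. lra.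
Qed.

Lemma sK_bound k : (1 <= k)%nat -> (k <= n)%nat ->
  (1 - (1 - lam ^ 2) * INR k / INR n) ^ sK n lam k <= 1 / 16.
Proof.
  intros Hk1 Hkn.
  assert (Hn : 2 <= INR n) by (replace 2 with (INR 2) by (simpl; lra); apply le_INR; auto).
  assert (Hk : 1 <= INR k) by (replace 1 with (INR 1) by (simpl; lra); apply le_INR; auto).
  assert (Hkn' : INR k <= INR n) by (apply le_INR; auto).
  set (al := (1 - lam ^ 2) * INR k / INR n).
  assert (Hal : 0 <= al <= 1).
  { unfold al. split.
    - apply Rmult_le_pos; [apply Rmult_le_pos; nra| apply Rlt_le, Rinv_0_lt_compat; lra].
    - apply (Rmult_le_reg_r (INR n)); [lra|]. unfold Rdiv. rewrite Rmult_assoc, Rinv_l by lra. nra. }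
  assert (H := bernoulli al (sK n lam k) Hal).
  assert (Hc := ceilN_spec (15 * INR n / ((1 - lam) * INR k))).
  assert (0 <= 15 * INR n / ((1 - lam) * INR k)).
  { apply Rmult_le_pos; [lra| apply Rlt_le, Rinv_0_lt_compat; nra]. }
  destruct (Hc H0) as [Hc1 _]. fold (sK n lam k) in Hc1.
  assert (Hsa : 15 <= INR (sK n lam k) * al).
  { apply Rle_trans with (15 * INR n / ((1 - lam) * INR k) * al).
    - unfold al. replace (15 * INR n / ((1 - lam) * INR k) * ((1 - lam ^ 2) * INR k / INR n))
        with (15 * (1 + lam)) by (field; repeat split; lra). nra.
    - apply Rmult_le_compat_r; lra. }
  assert (0 <= (1 - al) ^ sK n lam k) by (apply pow_le; lra).
  nra.
Qed.

Lemma Fs_mono k k' : (k <= k')%nat -> Fs n lam k <= Fs n lam k'.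
Proof.
  intros H. induction H; [lra|]. unfold Fs in *. cbn [rsum].
  assert (0 <= MK n lam m) by (unfold MK; assert (0 <= INR (TK n lam m)) by apply pos_INR; lra).
  lra.
Qed.

Lemma Fs_bound : Fs n lam (S n) <= 200 * (INR n * ln (INR n)) / (1 - lam).
Proof.
  assert (Hn : 2 <= INR n) by (replace 2 with (INR 2) by (simpl; lra); apply le_INR; auto).
  set (L := ln (INR n)).
  assert (HL : / 2 < L).
  { assert (H := ln2_pos). assert (ln 2 <= L) by (apply ln_mono; lra). lra. }
  set (ia := / (1 - lam)).
  assert (Hia : 1 <= ia).
  { unfold ia. replace 1 with (/ 1) by apply Rinv_1. apply Rinv_le_contravar; lra. }
  assert (Hia' : ia * (1 - lam) = 1) by (unfold ia; field; lra).
  assert (Ht1 : INR (t1c lam) <= ia + 1).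
  { destruct (ceilN_spec (1 / (1 - lam))) as [_ H]; [apply Rlt_le, Rdiv_lt_0_compat; lra|].
    fold (t1c lam) in H. unfold ia. unfold Rdiv in H. lra. }
  assert (Hl2 := ln2_pos).
  assert (Hmm : INR (mmc n) <= 3 + L).
  { assert (Hl4 : 0 < ln 4) by (rewrite ln4_eq; lra).
    destruct (ceilN_spec (ln (16 * INR n) / ln 4)) as [_ H].
    - apply Rmult_le_pos; [|apply Rlt_le, Rinv_0_lt_compat; auto].
      rewrite <- ln_1. apply ln_mono; lra.
    - fold (mmc n) in H.
      rewrite ln_mult in H by lra. rewrite ln16_eq, ln4_eq in H. fold L in H.
      replace ((4 * ln 2 + L) / (2 * ln 2)) with (2 + L / (2 * ln 2)) in H by (field; lra).
      assert (L / (2 * ln 2) <= L).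
      { apply (Rmult_le_reg_r (2 * ln 2)); [lra|]. unfold Rdiv. rewrite Rmult_assoc, Rinv_l by lra.
        assert (0 <= L) by lra. nra. }
      lra. }
  assert (Ht0 : INR (t0c n lam) <= 14 * L * ia).
  { unfold t0c. rewrite mult_INR.
    assert (0 <= INR (t1c lam)) by apply pos_INR. assert (0 <= INR (mmc n)) by apply pos_INR.
    apply Rle_trans with ((ia + 1) * (3 + L)); [apply Rmult_le_compat; auto|].
    nra. }
  unfold Fs. rewrite rsum_first. unfold MK at 1. simpl TK. simpl INR. rewrite Rmult_0_r, Rplus_0_l.
  apply Rle_trans with (rsum n (fun j => 30 * INR n * ia * / INR (S j) + 2 + 2 * INR (t0c n lam))).
  - apply rsum_le. intros j Hj. unfold MK, TK. rewrite plus_INR.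
    destruct (ceilN_spec (15 * INR n / ((1 - lam) * INR (S j)))) as [_ H].
    + apply Rmult_le_pos; [lra| apply Rlt_le, Rinv_0_lt_compat; apply Rmult_lt_0_compat; [lra| apply lt_0_INR; lia]].
    + fold (sK n lam (S j)) in H.
      replace (15 * INR n / ((1 - lam) * INR (S j))) with (15 * INR n * ia * / INR (S j)) in H
        by (unfold ia; field; split; [apply not_0_INR; lia| lra]).
      lra.
  - rewrite !rsum_plus, !rsum_const, rsum_scal.
    assert (Hh := harmonic n ltac:(lia)). fold L in Hh.
    assert (0 <= 30 * INR n * ia) by nra.
    assert (30 * INR n * ia * rsum n (fun j => / INR (S j)) <= 30 * INR n * ia * (1 + L))
      by (apply Rmult_le_compat_l; auto).
    replace (200 * (INR n * L) / (1 - lam)) with (200 * INR n * L * ia) by (unfold ia; field; lra).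
    assert (0 <= INR n * L) by nra.
    assert (INR n * 2 <= 4 * INR n * L * ia) by nra.
    assert (INR n * (2 * INR (t0c n lam)) <= 28 * INR n * L * ia) by nra.
    assert (30 * INR n * ia * (1 + L) <= 90 * INR n * L * ia) by nra.
    assert (0 <= INR n * L * ia) by nra.
    lra.
Qed.

End Consts.

Set Bullet Behavior "Strict Subproofs".

Definition inU (n : nat) (adj : nat -> nat -> bool) (h : list nat) : nat -> bool :=
  fun v => existsb (fun w => isE n adj v w && negb (traversed h v w)) (seq 0 n).

Definition unusedR (n : nat) (adj : nat -> nat -> bool) (h : list nat) : R :=
  rsum n (fun u => rsum n (fun v =>
    if Nat.ltb u v && isE n adj u v && negb (traversed h u v) then 1 else 0)).

Definition hfun (n d : nat) (adj : nat -> nat -> bool) (lam : R) (U : nat -> bool) (x : nat) : R :=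
  2 * rsum (TK n lam (cntU n U)) (fun t => gseq n d adj U t x).

Definition Phi (n d : nat) (adj : nat -> nat -> bool) (lam : R) (h : list nat) : R :=
  unusedR n adj h + Fs n lam (cntU n (inU n adj h)) + hfun n d adj lam (inU n adj h) (cur h).

Lemma has_unused_inU n adj h : has_unused n adj h = inU n adj h (cur h).
Proof. reflexivity. Qed.

Section Drift.
Context (n d : nat) (adj : nat -> nat -> bool) (lam : R) (Rl : rule).
Context (Hs : simple_graph n adj) (Hreg : regular n d adj) (Hd : (1 <= d)%nat) (Hn2 : (2 <= n)%nat).
Context (Hl0 : 0 <= lam) (Hl1 : lam < 1).
Context (Hspec : forall f, inner n (Aop n d adj f) (Aop n d adj f) <=
   lam^2 * inner n f f + (1 - lam^2) * (inner n f (fun _ => 1))^2 / INR n).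
Context (Hval : valid_rule n adj Rl).

Lemma Hn1 : (1 <= n)%nat.
Proof. lia. Qed.

Lemma MK_nonneg k : 0 <= MK n lam k.
Proof. unfold MK. assert (0 <= INR (TK n lam k)) by apply pos_INR. lra. Qed.

Lemma Fs_nonneg k : 0 <= Fs n lam k.
Proof. unfold Fs. apply rsum_nonneg. intros; apply MK_nonneg. Qed.

Lemma hfun_bounds U x : 0 <= hfun n d adj lam U x <= MK n lam (cntU n U).
Proof.
  unfold hfun, MK. split.
  - apply Rmult_le_pos; [lra|]. apply rsum_nonneg. intros. apply (g_bounds n d adj Hreg Hd Hn1).
  - apply Rmult_le_compat_l; [lra|]. rewrite <- (Rmult_1_r (INR _)), <- rsum_const.
    apply rsum_le. intros. apply (g_bounds n d adj Hreg Hd Hn1).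
Qed.

Lemma hfun_U U x : U x = true -> hfun n d adj lam U x = 0.
Proof.
  intros H. unfold hfun. rewrite (rsum_ext _ _ (fun _ => 0)).
  - rewrite rsum_zero. ring.
  - intros t _. apply (g_U n d adj U t x H).
Qed.

Lemma hfun_super U x : (x < n)%nat -> U x = false -> (1 <= cntU n U)%nat ->
  1 + Aop n d adj (hfun n d adj lam U) x <= hfun n d adj lam U x.
Proof.
  intros Hx HU Hk.
  set (T := TK n lam (cntU n U)).
  set (g := gseq n d adj U).
  assert (HA : Aop n d adj (hfun n d adj lam U) x = 2 * rsum T (fun t => g (S t) x)).
  { unfold Aop, hfun. fold T g.
    rewrite (rsum_ext _ _ (fun w => 2 * rsum T (fun t => (if isE n adj x w then / INR d else 0) * g t w))).
    - rewrite rsum_scal, rsum_swap. f_equal. apply rsum_ext. intros t _.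
      unfold g. simpl. rewrite HU. reflexivity.
    - intros w _. rewrite rsum_scal. ring. }
  assert (Hshift : rsum T (fun t => g (S t) x) = rsum T (fun t => g t x) - g 0%nat x + g T x).
  { assert (E := rsum_first T (fun t => g t x)). cbn [rsum] in E. lra. }
  assert (Hg0 : g 0%nat x = 1) by (unfold g; simpl; rewrite HU; reflexivity).
  assert (HgT : g T x <= 1/2).
  { unfold T. destruct (cntU n U) as [|k] eqn:Ek; [lia|]. unfold TK. rewrite <- Ek.
    apply (hit_half n d adj lam Hs Hreg Hd Hn1 Hl1 Hl0 Hspec U); auto.
    - rewrite Ek. apply sK_bound; auto; try lia. rewrite <- Ek. apply cntU_le.
    - apply t0_bound; auto. }
  rewrite HA. unfold hfun. fold T g. rewrite Hshift, Hg0. lra.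
Qed.

Lemma random_step_tr h w : h <> [] -> has_unused n adj h = false -> isE n adj (cur h) w = true ->
  traversed (h ++ [w]) = traversed h.
Proof.
  intros Hh Hu Hw. apply functional_extensionality; intros u. apply functional_extensionality; intros v.
  rewrite traversed_app by auto.
  assert (Htr : traversed h (cur h) w = true).
  { unfold has_unused in Hu. destruct (traversed h (cur h) w) eqn:E; auto. exfalso.
    assert (Hin : In w (seq 0 n)) by (apply in_seq; apply isE_true in Hw; lia).
    assert (existsb (unused_at n adj h) (seq 0 n) = true).
    { apply existsb_exists. exists w. split; auto. unfold unused_at. rewrite Hw, E. reflexivity. }
    congruence. }
  destruct (same_edge (cur h, w) u v) eqn:Es; [|apply orb_false_r].
  rewrite orb_true_r. unfold same_edge in Es. simpl in Es.
  apply orb_prop in Es as [Es|Es]; apply andb_prop in Es as [E1 E2];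
    apply Nat.eqb_eq in E1; apply Nat.eqb_eq in E2; subst; auto.
  rewrite traversed_sym. auto.
Qed.

Lemma tr_mono_app h w u v : h <> [] -> traversed h u v = true -> traversed (h ++ [w]) u v = true.
Proof. intros Hh H. rewrite traversed_app by auto. rewrite H. reflexivity. Qed.

Lemma inU_sub h w v : h <> [] -> (v < n)%nat -> inU n adj (h ++ [w]) v = true -> inU n adj h v = true.
Proof.
  intros Hh _ H. unfold inU in *. apply existsb_exists in H as [w' [Hin H]].
  apply existsb_exists. exists w'. split; auto.
  apply andb_prop in H as [H1 H2]. rewrite H1. simpl.
  destruct (traversed h v w') eqn:E; auto.
  rewrite (tr_mono_app h w v w' Hh E) in H2. discriminate.
Qed.

Lemma Phi_nonneg h : 0 <= Phi n d adj lam h.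
Proof.
  unfold Phi. assert (0 <= unusedR n adj h).
  { unfold unusedR. apply rsum_nonneg; intros; apply rsum_nonneg; intros. destruct (_ && _); lra. }
  assert (H2 := Fs_nonneg (cntU n (inU n adj h))).
  assert (H3 := hfun_bounds (inU n adj h) (cur h)). lra.
Qed.

Lemma greedy_step h w : h <> [] -> (cur h < n)%nat -> unused_at n adj h w = true ->
  Phi n d adj lam (h ++ [w]) + 1 <= Phi n d adj lam h.
Proof.
  intros Hh Hx Hw. set (x := cur h) in *.
  unfold unused_at in Hw. fold x in Hw. apply andb_prop in Hw as [Hxw Hnt].
  apply negb_true_iff in Hnt.
  destruct (isE_true _ _ _ _ Hxw) as [_ [Hwn _]].
  assert (Hxw' : x <> w) by (intro E; subst; rewrite isE_irrefl in Hxw; auto; discriminate).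
  set (h' := h ++ [w]).
  assert (Htr' : traversed h' x w = true).
  { unfold h'. rewrite traversed_app by auto. fold x. unfold same_edge. simpl.
    rewrite !Nat.eqb_refl. rewrite orb_true_r. reflexivity. }
  assert (HunR : unusedR n adj h' + 1 <= unusedR n adj h).
  { unfold unusedR.
    set (a := Nat.min x w). set (b := Nat.max x w).
    assert (Hab : (a < b)%nat) by (unfold a, b; lia).
    assert (Hisab : isE n adj a b = true).
    { unfold a, b. destruct (Nat.le_gt_cases x w).
      - rewrite Nat.min_l, Nat.max_r by lia. auto.
      - rewrite Nat.min_r, Nat.max_l by lia. rewrite isE_sym; auto. }
    assert (Htrab : traversed h a b = false /\ traversed h' a b = true).
    { unfold a, b. destruct (Nat.le_gt_cases x w).
      - rewrite Nat.min_l, Nat.max_r by lia. auto.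
      - rewrite Nat.min_r, Nat.max_l by lia. rewrite (traversed_sym h), (traversed_sym h'). auto. }
    destruct Htrab as [Hab1 Hab2].
    unfold h' in *.
    apply (rsum_strict n _ _ a).
    - intros u Hu. apply rsum_le. intros v Hv.
      destruct (traversed h u v) eqn:E.
      + rewrite (tr_mono_app h w u v Hh E). rewrite !andb_false_r. lra.
      + rewrite andb_true_r. destruct (Nat.ltb u v && isE n adj u v); simpl; [|lra].
        destruct (traversed (h ++ [w]) u v); simpl; lra.
    - unfold a. lia.
    - apply (rsum_strict n _ _ b).
      + intros v Hv. destruct (traversed h a v) eqn:E.
        * rewrite (tr_mono_app h w a v Hh E). rewrite !andb_false_r. lra.
        * rewrite andb_true_r. destruct (Nat.ltb a v && isE n adj a v); simpl; [|lra].
          destruct (traversed (h ++ [w]) a v); simpl; lra.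
      + unfold b. lia.
      + rewrite Hab2, Hab1. apply Nat.ltb_lt in Hab. rewrite Hab, Hisab. simpl. lra. }
  set (U := inU n adj h). set (U' := inU n adj h').
  assert (Hsub : forall v, (v < n)%nat -> U' v = true -> U v = true).
  { intros v Hv. apply inU_sub; auto. }
  assert (HUw : U w = true).
  { unfold U, inU. apply existsb_exists. exists x. split; [apply in_seq; lia|].
    rewrite isE_sym by auto. rewrite Hxw. rewrite traversed_sym, Hnt. reflexivity. }
  assert (HF : Fs n lam (cntU n U') + hfun n d adj lam U' w <= Fs n lam (cntU n U)).
  { destruct (U' w) eqn:EU'.
    - rewrite hfun_U by auto. rewrite Rplus_0_r. apply Fs_mono. apply cntU_mono. auto.
    - assert (Hlt : (cntU n U' < cntU n U)%nat) by (apply (cntU_strict n _ _ w); auto).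
      apply Rle_trans with (Fs n lam (S (cntU n U'))).
      + unfold Fs at 2. cbn [rsum]. fold (Fs n lam (cntU n U')).
        assert (H := hfun_bounds U' w). lra.
      + apply Fs_mono. lia. }
  assert (Hh0 := hfun_bounds U x).
  unfold Phi. fold U U'. replace (cur h') with w by (unfold h'; rewrite cur_app; auto). fold x.
  lra.
Qed.

Lemma drift h : h <> [] -> (cur h < n)%nat -> covered n adj h = false ->
  1 + rsum n (fun w => trans n d adj Rl h w * Phi n d adj lam (h ++ [w])) <= Phi n d adj lam h.
Proof.
  intros Hh Hx Hc.
  destruct (has_unused n adj h) eqn:Hu.
  - destruct (Hval h Hu) as [Hnn [Hsupp Hsum]].
    unfold trans. rewrite Hu.
    apply Rle_trans with (1 + rsum n (fun w => Rl h w * (Phi n d adj lam h - 1))).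
    + apply Rplus_le_compat_l. apply rsum_le. intros w Hw.
      destruct (Req_dec (Rl h w) 0) as [E|E].
      * rewrite E. lra.
      * apply Rmult_le_compat_l; auto. apply Hsupp in E.
        assert (H := greedy_step h w Hh Hx E). lra.
    + rewrite rsum_scal_r, Hsum. lra.
  - set (x := cur h) in *.
    set (U := inU n adj h).
    assert (HUx : U x = false) by (unfold U, x; rewrite <- has_unused_inU; auto).
    assert (Hk : (1 <= cntU n U)%nat).
    { destruct (classic (exists u v, isE n adj u v = true /\ traversed h u v = false))
        as [[u [v [Huv Htr]]]|Hne].
      - destruct (isE_true _ _ _ _ Huv) as [Hu' [Hv' _]].
        apply (cntU_pos n U u); auto. unfold U, inU. apply existsb_exists. exists v.
        split; [apply in_seq; lia|]. rewrite Huv, Htr. reflexivity.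
      - exfalso. assert (covered n adj h = true); [|congruence].
        apply covered_iff. intros u v Huv. destruct (traversed h u v) eqn:E; auto.
        exfalso. apply Hne. exists u, v. auto. }
    assert (HPr : forall w, isE n adj x w = true ->
       Phi n d adj lam (h ++ [w]) = unusedR n adj h + Fs n lam (cntU n U) + hfun n d adj lam U w).
    { intros w Hw. unfold Phi, unusedR, U, inU. rewrite (random_step_tr h w Hh Hu Hw), cur_app.
      reflexivity. }
    set (c := unusedR n adj h + Fs n lam (cntU n U)).
    unfold trans. rewrite Hu. fold x.
    rewrite (rsum_ext _ _ (fun w => (if isE n adj x w then / INR d else 0) *
                                    (c * 1 + 1 * hfun n d adj lam U w))).
    2:{ intros w Hw. destruct (isE n adj x w) eqn:E.
        - rewrite HPr by auto. unfold c. ring.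
        - ring. }
    fold (Aop n d adj (fun w => c * 1 + 1 * hfun n d adj lam U w) x).
    assert (EA := A_lin n d adj x (fun _ => 1) (hfun n d adj lam U) c 1 Hx). cbv beta in EA.
    rewrite EA.
    rewrite (A_one n d adj Hreg Hd Hn1) by auto.
    assert (H := hfun_super U x Hx HUx Hk).
    unfold Phi. fold U. fold x. fold c. lra.
Qed.

End Drift.

Set Bullet Behavior "Strict Subproofs".

Lemma INR_list_sum_seq (F : nat -> nat) k :
  INR (list_sum (map F (seq 0 k))) = rsum k (fun u => INR (F u)).
Proof.
  induction k; auto. rewrite seq_S, map_app, list_sum_app, plus_INR, IHk. simpl (0 + k)%nat. unfold list_sum; simpl fold_right. rewrite Nat.add_0_r. reflexivity.
Qed.

Lemma unusedR_init n adj v0 : unusedR n adj [v0] = INR (edge_count n adj).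
Proof.
  unfold edge_count. rewrite INR_list_sum_seq. unfold unusedR. apply rsum_ext. intros u _.
  rewrite len_filter_rsum. apply rsum_ext. intros v _.
  replace (traversed [v0] u v) with false by reflexivity. rewrite andb_true_r. reflexivity.
Qed.

Lemma prob_cover_eq_Xeq n d adj Rl v0 t :
  prob_cover_eq n d adj Rl v0 (S t) = Xeq n d adj Rl (S t) [v0].
Proof.
  unfold prob_cover_eq, Xeq. apply lsum_map_ext_in. intros ws Hws.
  destruct ws as [|w ws]; [exfalso; apply (all_seqs_nonnil n t [] Hws); auto|].
  reflexivity.
Qed.

Theorem mainTheorem4 :
  exists C : R, 0 < C /\
    forall (n d : nat) (adj : nat -> nat -> bool) (lam : R),
      expander n d adj lam ->
      connected n adj ->
      forall Rl : rule, valid_rule n adj Rl ->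
      forall v0 : nat, (v0 < n)%nat ->
        expected_cover_le n d adj Rl v0
          (INR (edge_count n adj) + C * (INR n * ln (INR n)) / (1 - lam)).
Proof.
  exists 200. split; [lra|].
  intros n d adj lam [Hs [Hreg [Hlg Hl1]]] _ Rl Hval v0 Hv0.
  destruct (covered n adj [v0]) eqn:Hc0.
  -
    assert (HB : 0 <= INR (edge_count n adj) + 200 * (INR n * ln (INR n)) / (1 - lam)).
    { assert (0 <= INR (edge_count n adj)) by apply pos_INR.
      assert (Hn : 1 <= INR n) by (replace 1 with (INR 1) by reflexivity; apply le_INR; lia).
      assert (0 <= ln (INR n)) by (rewrite <- ln_1; apply ln_mono; lra).
      assert (0 <= 200 * (INR n * ln (INR n)) / (1 - lam)).
      { apply Rmult_le_pos; [nra| apply Rlt_le, Rinv_0_lt_compat; lra]. }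
      lra. }
    split.
    + intros eps Heps. exists 0%nat. unfold prob_cover_le. simpl. rewrite Hc0. lra.
    + intros T. rewrite rsum_first. simpl (INR 0). rewrite Rmult_0_l, Rplus_0_l.
      rewrite (rsum_ext _ _ (fun _ => 0)).
      * rewrite rsum_zero. auto.
      * intros t _. rewrite prob_cover_eq_Xeq, Xeq_covered; [ring| discriminate| auto].
  -
    destruct (classic (exists u v, isE n adj u v = true /\ traversed [v0] u v = false))
      as [[u [v [Huv _]]]|Hne].
    2:{ exfalso. assert (covered n adj [v0] = true); [|congruence].
        apply covered_iff. intros u v Huv. destruct (traversed [v0] u v) eqn:E; auto.
        exfalso. apply Hne. exists u, v. auto. }
    destruct (isE_true _ _ _ _ Huv) as [Hu [Hv _]].
    assert (Huv' : u <> v) by (intro E; subst; rewrite isE_irrefl in Huv; auto; discriminate).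
    assert (Hn2 : (2 <= n)%nat) by lia.
    assert (Hd : (1 <= d)%nat).
    { assert (H := nbr_sum n d adj u Hreg Hu).
      assert (1 <= rsum n (fun w => if isE n adj u w then 1 else 0)).
      { apply Rle_trans with ((fun w => if isE n adj u w then 1 else 0) v).
        - simpl. rewrite Huv. lra.
        - apply (rsum_single_le n (fun w => if isE n adj u w then 1 else 0)); auto.
          intros; destruct (isE n adj u j); lra. }
      destruct d; [simpl in H; lra| lia]. }
    destruct Hlg as [mu [vec [Horth [Heig [_ Hmu]]]]].
    assert (Hl0 : 0 <= lam).
    { specialize (Hmu 1%nat ltac:(lia) ltac:(lia)). assert (H := Rabs_pos (mu 1%nat)). lra. }
    assert (Hn1 : (1 <= n)%nat) by lia.
    assert (Hspec := spec_main n d adj lam mu vec Hs Hreg Hd Hn1 Horth Heig Hmu Hl1 Hl0).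
    apply (expected_of_potential n d adj Rl Hreg Hd Hval (Phi n d adj lam)).
    + apply (Phi_nonneg n d adj lam Hreg Hd Hn2).
    + intros h Hh Hx Hc. eapply drift; eauto.
    + auto.
    + unfold Phi. rewrite unusedR_init.
      set (U := inU n adj [v0]).
      assert (H1 := hfun_bounds n d adj lam Hreg Hd Hn2 U (cur [v0])).
      assert (H2 : Fs n lam (cntU n U) + MK n lam (cntU n U) <= Fs n lam (S n)).
      { apply Rle_trans with (Fs n lam (S (cntU n U))).
        - unfold Fs at 2. cbn [rsum]. unfold Fs. lra.
        - apply Fs_mono. assert (H := cntU_le n U). lia. }
      assert (H3 := Fs_bound n lam Hn2 Hl0 Hl1).
      lra.
Qed.
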